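(* Let $\mathbb{F}_q$ be a finite field with $4 \mid q-1$, and let $f \in \mathbb{F}_q[x]$ be irreducible of even degree $d$, so that $\mathbb{F}_{q^d} = \mathbb{F}_q[x]/\langle f\rangle$. Then the formal derivative $f'$ (taken modulo $f$) is a quadratic nonresidue in $\mathbb{F}_q[x]/\langle f\rangle$.
   Context: An element $a$ of a finite field $F$ is a quadratic nonresidue if $x^2=a$ has no solution in $F$. *)

(* Defs.v *)
From HB Require Import structures.
From mathcomp Require Import all_boot all_order all_algebra all_field.
Set Implicit Arguments. Unset Strict Implicit. Unset Printing Implicit Defensive.
Import GRing.Theory.
Local Open Scope ring_scope.

Definition quad_nonresidue (R : pzRingType) (a : R) : Prop :=
  ~ exists x : R, x ^+ 2 = a.

(* monic normalisation of f; generates the same ideal <f> as f when f != 0.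
   MathComp's quotient ring {poly %/ h} requires h monic. *)
Definition monic_of (F : fieldType) (f : {poly F}) : {poly F} :=
  (lead_coef f)^-1 *: f.

(* Main.v *)
Require Import Defs.
From HB Require Import structures.
From mathcomp Require Import all_boot all_order all_algebra all_field.
From mathcomp Require Import zify ring.
Set Implicit Arguments. Unset Strict Implicit. Unset Printing Implicit Defensive.
Import GRing.Theory.
Local Open Scope ring_scope.

Section Frob.
Variables (K : fieldType) (m : nat) (hm : [pchar K].-nat m).
Definition frobm of [pchar K].-nat m := fun x : K => x ^+ m.
Local Notation fr := (frobm hm).
Fact frobm_zmod : zmod_morphism fr.
Proof. by move=> x y; rewrite /frobm exprDn_pchar // exprNn_pchar. Qed.
Fact frobm_mon : monoid_morphism fr.
Proof.
split; first by rewrite /frobm expr1n.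
by move=> x y; rewrite /frobm exprMn.
Qed.
HB.instance Definition _ := GRing.isZmodMorphism.Build K K fr frobm_zmod.
HB.instance Definition _ := GRing.isMonoidMorphism.Build K K fr frobm_mon.
End Frob.

Lemma cardF_pnat (F : finFieldType) : exists2 p, p \in [pchar F] & exists k, #|F| = (p ^ k)%N.
Proof.
have [p pr pc] := finPcharP F.
exists p => //. exists (logn p #|F|). exact: (card_pprimeChar pc).
Qed.

Lemma pchar_nat_card (F K : finFieldType) (iota : {rmorphism F -> K}) k :
  [pchar K].-nat (#|F| ^ k)%N.
Proof.
have [p pc [e he]] := cardF_pnat F.
rewrite (eq_pnat _ (fmorph_pchar iota)) (eq_pnat _ (pcharf_eq pc)) he -expnM.
rewrite pnatX; apply/orP; left; exact: pnat_id (pcharf_prime pc).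
Qed.

Lemma frob_horner (F K : finFieldType) (iota : {rmorphism F -> K}) k (p : {poly F}) (y : K) :
  ((map_poly iota p).[y]) ^+ (#|F| ^ k) = (map_poly iota p).[y ^+ (#|F| ^ k)].
Proof.
have hm := pchar_nat_card iota k.
have fix1 : forall c : F, c ^+ (#|F| ^ k) = c.
  elim: k {hm} => [|k IH] c; first by rewrite expr1.
  by rewrite expnSr exprM IH expf_card.
have := horner_map (frobm hm : {rmorphism K -> K}) (map_poly iota p) y.
rewrite /= /frobm => <-; congr (_.[_]).
rewrite -(map_poly_comp (frobm hm)) /=; apply: eq_map_poly => c /=.
by rewrite /frobm -rmorphXn fix1.
Qed.
Section Comb.
Variables (R : comNzRingType) (m : nat) (hm : (0 < m)%N).
Local Notation d := (m + m)%N.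

Lemma cyc1 (g : nat -> R) : (forall k, g (k + d)%N = g k) ->
  \prod_(0 <= k < d) g (k + 1)%N = \prod_(0 <= k < d) g k.
Proof.
move=> hg; have [d' hd'] : exists d', d = d'.+1 by exists (m + m).-1; rewrite prednK // addn_gt0 hm.
rewrite hd' [RHS]big_nat_recl // [LHS]big_nat_recr //= mulrC; congr (_ * _).
  by rewrite addn1 -hd' -(hg 0%N) add0n.
by apply: eq_bigr => k _; rewrite addn1.
Qed.

Lemma cyc (g : nat -> R) j : (forall k, g (k + d)%N = g k) ->
  \prod_(0 <= k < d) g (k + j)%N = \prod_(0 <= k < d) g k.
Proof.
elim: j g => [|j IH] g hg; first by apply: eq_bigr => k _; rewrite addn0.
have hg' : forall k, g (k + d + j)%N = g (k + j)%N by move=> k; rewrite addnAC hg.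
have := cyc1 (g := fun k => g (k + j)%N) hg'.
rewrite /= (IH g hg) => <-; apply: eq_bigr => k _; by rewrite addnAC addn1 addnS.
Qed.

Definition Xx (r : nat -> R) k i := r k - r (k + i)%N.
Definition Cc r i := \prod_(0 <= k < d) Xx r k i.
Definition Dd r := \prod_(0 <= k < d) \prod_(1 <= i < d) Xx r k i.
Definition Aa r := \prod_(0 <= k < d) \prod_(1 <= i < m) Xx r k i.
Definition Bb r := \prod_(0 <= k < m) Xx r k m.

Variables (r : nat -> R) (hr : forall k, r (k + d)%N = r k).

Lemma hr' k x : r (k + d + x)%N = r (k + x)%N.
Proof. by rewrite addnAC hr. Qed.

Lemma m1d : (-1) ^+ d = 1 :> R.
Proof. by rewrite exprD -exprMn mulrNN mulr1 expr1n. Qed.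

Lemma C_sym i : (i <= d)%N -> Cc r (d - i) = Cc r i.
Proof.
move=> hi; rewrite /Cc -(cyc (g := fun k => Xx r k (d - i)) i); last first.
  by move=> k; rewrite /Xx hr hr'.
have -> : \prod_(0 <= k < d) Xx r (k + i) (d - i) = \prod_(0 <= k < d) ((-1) * Xx r k i).
  apply: eq_bigr => k _; rewrite /Xx -addnA subnKC // hr mulN1r opprB //.
by rewrite big_split /= prodr_const_nat subn0 m1d mul1r.
Qed.

Lemma D_C : Dd r = \prod_(1 <= i < d) Cc r i.
Proof. by rewrite /Dd exchange_big_nat. Qed.

Lemma C_mid : Cc r m = (-1) ^+ m * Bb r ^+ 2.
Proof.
rewrite /Cc (big_cat_nat _ (n := m)) ?leq_addr //= -/(Bb r).
rewrite -{1}(add0n m) big_addn addnK.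
have -> : \prod_(0 <= i < m) Xx r (i + m) m = \prod_(0 <= i < m) ((-1) * Xx r i m).
  apply: eq_bigr => k _; rewrite /Xx -addnA hr mulN1r opprB //.
by rewrite big_split /= prodr_const_nat subn0 mulrCA expr2.
Qed.

Lemma C_tail : \prod_(m.+1 <= i < d) Cc r i = \prod_(1 <= i < m) Cc r i.
Proof.
rewrite [RHS](eq_big_nat _ _ (F2 := fun i => Cc r (d - i))); last first.
  by move=> i /andP[_ hi]; rewrite C_sym // ltnW // (leq_trans hi) ?leq_addr.
rewrite [RHS]big_nat_rev /= (big_addn 0 d m.+1) [RHS](big_addn 0 m 1).
have -> : (d - m.+1 = m - 1)%N by rewrite -addn1 subnDA addnK subn1.
apply: eq_big_nat => i /andP[_ hi]; congr (Cc r _); lia.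
Qed.

Lemma D_eq : Dd r = (-1) ^+ m * (Aa r * Bb r) ^+ 2.
Proof.
rewrite D_C (big_cat_nat _ (n := m)) ?leq_addr //= [\prod_(m <= i < d) _]big_ltn //.
rewrite C_mid C_tail /Aa exchange_big_nat /= -/(Cc r).
rewrite !exprMn expr2; ring.

all: lia.
Qed.

Lemma A_shift : Aa (fun k => r k.+1) = Aa r.
Proof.
rewrite /Aa -(cyc1 (g := fun k => \prod_(1 <= i < m) Xx r k i)); last first.
  by move=> k; apply: eq_bigr => i _; rewrite /Xx hr hr'.
apply: eq_bigr => k _; apply: eq_bigr => i _; by rewrite /Xx addn1 addSn.
Qed.

Lemma B_shift : Bb (fun k => r k.+1) = - Bb r.
Proof.
rewrite /Bb /Xx; case: m hm hr => // m' _ hr0.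
rewrite big_nat_recr // [in RHS]big_nat_recl //= mulrC -mulNr; congr (_ * _).
have -> : r (m' + m'.+1).+1 = r 0 by rewrite -addSn -(hr0 0%N) add0n.
by rewrite add0n opprB.
Qed.
End Comb.

Lemma fixF (F : finFieldType) k (c : F) : c ^+ (#|F| ^ k) = c.
Proof. elim: k => [|k IH]; first by rewrite expr1. by rewrite expnSr exprM IH expf_card. Qed.

Lemma powm1 (K : fieldType) (y c : K) n : y != 0 -> y ^+ n.+1 = c * y -> y ^+ n = c.
Proof. by move=> y0; rewrite exprSr => /(mulIf y0). Qed.

Section Main.
Variables (F K : finFieldType) (iota : {rmorphism F -> K}) (f : {poly F}) (a : K).
Local Notation q := #|F|.
Local Notation d := (size f).-1.
Hypotheses (h4 : (4 %| q - 1)%N) (hd0 : (0 < d)%N) (hdeven : ~~ odd d)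
  (hK : #|K| = (q ^ d)%N) (hroot : root (map_poly iota f) a)
  (hgen : forall y : K, exists p : {poly F}, y = (map_poly iota p).[a]).

Definition rrdef i := a ^+ (q ^ i).

Lemma q_gt1 : (1 < q)%N. Proof. exact: finNzRing_gt1. Qed.

Lemma rr_per i : rrdef (i + d) = rrdef i.
Proof. by rewrite /rrdef expnD exprM -hK expf_card. Qed.

Lemma rr_pow i k : rrdef i ^+ (q ^ k) = rrdef (i + k).
Proof. by rewrite /rrdef -exprM -expnD. Qed.

Lemma rr_root i : root (map_poly iota f) (rrdef i).
Proof.
rewrite /root /rrdef -frob_horner (rootP hroot) expr0n expn_eq0.
by case: q q_gt1.
Qed.

End Main.
Section Main2.
Variables (F K : finFieldType) (io : {rmorphism F -> K}) (f : {poly F}) (a : K).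
Local Notation q := #|F|.
Local Notation d := (size f).-1.
Hypotheses (h4 : (4 %| q - 1)%N) (hd0 : (0 < d)%N) (hdeven : ~~ odd d)
  (hK : #|K| = (q ^ d)%N) (hroot : root (map_poly io f) a)
  (hgen : forall y : K, exists p : {poly F}, y = (map_poly io p).[a]).
Local Notation rr := (rrdef F a).
Local Notation rr_pow := (rr_pow F a).
Local Notation rr_per := (rr_per a hK).

Lemma rr_inj i j : (i < d)%N -> (j < d)%N -> rr i = rr j -> i = j.
Proof.
wlog lt_ij : i j / (i <= j)%N.
  move=> W hi hj e; case: (leqP i j) => [l|l]; first exact: W.
  by apply/esym/W => //; apply: ltnW.
move=> hi hj e; case: (ltngtP i j) lt_ij => // ltij _.
exfalso; set k := (j - i)%N.
have ek : a = rr k.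
  have := congr1 (fun y => y ^+ (q ^ (d - i))) e; rewrite /= !rr_pow.
  have -> : (j + (d - i) = k + d)%N by rewrite /k; move: hi ltij; clear; lia.
  have -> : (i + (d - i) = 0 + d)%N by move: hi; clear; lia.
  by rewrite !rr_per {1}/rrdef expn0 expr1.
have fixall : forall y : K, y ^+ (q ^ k) = y.
  move=> y; have [p ->] := hgen y; by rewrite frob_horner -/(rr k) -ek.
pose P : {poly K} := 'X^(q ^ k) - 'X.
have qk1 : (1 < q ^ k)%N.
  by rewrite -{1}(expn0 q) ltn_exp2l ?q_gt1 // subn_gt0.
have szP : size P = (q ^ k).+1.
  by rewrite /P size_polyDl ?size_polyXn // size_polyN size_polyX ltnS.
have := @max_poly_roots _ P (enum K).
have -> : all (root P) (enum K).
  by apply/allP => y _; rewrite /root /P !hornerE fixall subrr.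
rewrite -size_poly_eq0 szP enum_uniq -cardE hK => /(_ isT isT isT).
rewrite ltnS leq_exp2l ?q_gt1 // /k; move: hj; clear; lia.
Qed.

Lemma rr0 : rr 0 = a. Proof. by rewrite /rrdef expn0 expr1. Qed.

Lemma size_f_gt1 : (1 < size f)%N. Proof. by move: hd0; case: (size f) => [|[]]. Qed.

Lemma f_fact : map_poly io f = io (lead_coef f) *: \prod_(0 <= i < d) ('X - (rr i)%:P).
Proof.
have := @all_roots_prod_XsubC _ (map_poly io f) [seq rr i | i <- iota 0 d].
rewrite size_map_poly size_map size_iota prednK ?(ltnW size_f_gt1) // => /(_ erefl).
have -> : all (root (map_poly io f)) [seq rr i | i <- iota 0 d].
  by apply/allP => z /mapP [i _ ->]; exact: rr_root.
rewrite uniq_rootsE map_inj_in_uniq ?iota_uniq; last first.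
  by move=> i j; rewrite !mem_iota !add0n => /andP[_ hi] /andP[_ hj]; exact: rr_inj.
move=> /(_ isT isT) {1}->; rewrite lead_coef_map big_map /index_iota subn0 //.
Qed.

Lemma E_formula : (map_poly io f^`()).[a] = io (lead_coef f) * \prod_(1 <= i < d) Xx rr 0 i.
Proof.
rewrite -deriv_map f_fact derivZ hornerZ; congr (_ * _).
have [d' hd'] : exists d', d = d'.+1 by exists d.-1; rewrite prednK.
rewrite hd' big_nat_recl // derivM derivXsubC mul1r hornerD hornerM hornerXsubC.
rewrite -{2}rr0 subrr mul0r addr0 horner_prod big_add1 /=.
by apply: eq_bigr => i _; rewrite hornerXsubC rr0 /Xx add0n.
Qed.

Lemma E_pow k : ((map_poly io f^`()).[a]) ^+ (q ^ k) = io (lead_coef f) * \prod_(1 <= i < d) Xx rr k i.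
Proof.
have hm := pchar_nat_card io k.
have frobB : forall x y : K, (x - y) ^+ (q ^ k) = x ^+ (q ^ k) - y ^+ (q ^ k).
  by move=> x y; exact: (rmorphB (frobm hm)).
rewrite E_formula exprMn -rmorphXn fixF -prodrXl; congr (_ * _).
by apply: eq_bigr => i _; rewrite /Xx frobB !rr_pow add0n addnC.
Qed.

Lemma rr_mod x : rr x = rr (x %% d).
Proof.
rewrite {1}(divn_eq x d) addnC; elim: (x %/ d)%N => [|n IH]; first by rewrite mul0n addn0.
by rewrite mulSn addnCA addnC rr_per.
Qed.

Lemma Xx_neq0 k i : (0 < i < d)%N -> Xx rr k i != 0.
Proof.
move=> /andP[i0 id]; rewrite /Xx subr_eq0 rr_mod [rr (k + i)]rr_mod.
apply/contraL: (i0) => /eqP /rr_inj; rewrite !ltn_pmod // => /(_ isT isT) /eqP.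
by rewrite -{1}(addn0 k) eqn_modDl mod0n modn_small // eq_sym => /eqP ->.
Qed.

Lemma prod_nat_neq0 (R : idomainType) lo hi (G : nat -> R) :
  (forall i, (lo <= i < hi)%N -> G i != 0) -> \prod_(lo <= i < hi) G i != 0.
Proof.
move=> H; rewrite prodf_seq_neq0; apply/allP => i; rewrite mem_index_iota => hi'.
exact: H.
Qed.

Lemma q_odd : odd q.
Proof.
have := q_gt1 F; move: h4 => /dvdnP [u hu] hq.
by rewrite -(subnK (ltnW hq)) hu addn1 /= oddM andbF.
Qed.

Lemma char_not2 : (1 : K) != -1.
Proof.
apply/negP => /eqP e.
have two : (2%:R : K) = 0 by rewrite mulr2n {1}e addNr.
have c2 : (2 \in [pchar K])%N by rewrite inE two eqxx.
rewrite (fmorph_pchar io) in c2.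
have [p pc [e' he]] := cardF_pnat F.
have := pcharf_eq pc 2; rewrite c2 => /esym; rewrite inE => /eqP p2.
have := q_odd; rewrite he -p2 oddX orbF => /eqP e0.
by have := q_gt1 F; rewrite he e0.
Qed.

Local Notation m := (d./2).
Lemma hdm : d = (m + m)%N.
Proof. by rewrite addnn -{1}(odd_double_half d) (negbTE hdeven) add0n. Qed.
Lemma hm0 : (0 < m)%N.
Proof. have := hd0; rewrite {1}hdm; by case: (d./2). Qed.
Lemma m_lt_d : (m < d)%N.
Proof. by rewrite {2}hdm -{1}(addn0 m) ltn_add2l hm0. Qed.
Lemma hrr k : rr (k + (m + m)) = rr k.
Proof. by rewrite -hdm rr_per. Qed.

Local Notation delta := (Aa m rr * Bb m rr).

Lemma delta_neq0 : delta != 0.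
Proof.
rewrite mulf_neq0 //; apply: prod_nat_neq0 => k hk.
  apply: prod_nat_neq0 => i /andP[i1 im]; apply: Xx_neq0; rewrite i1 /=.
  by rewrite (ltn_trans im) ?m_lt_d.
by apply: Xx_neq0; rewrite hm0 m_lt_d.
Qed.

Lemma frobq_fact : exists fr : {rmorphism K -> K}, forall x, fr x = x ^+ q.
Proof.
have hm := pchar_nat_card io 1.
exists (frobm hm) => x; change (x ^+ (q ^ 1) = x ^+ q); by rewrite expn1.
Qed.

Lemma delta_pow : delta ^+ (q.-1) = -1.
Proof.
have [fr hfr] := frobq_fact.
have frr : forall k, fr (rr k) = rr k.+1.
  by move=> k; rewrite hfr -(expn1 q) rr_pow addn1.
apply: powm1; first exact: delta_neq0.
rewrite prednK ?(ltnW (q_gt1 F)) // -hfr rmorphM.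
have -> : fr (Aa m rr) = Aa m (fun k => rr k.+1).
  rewrite /Aa rmorph_prod; apply: eq_bigr => k _; rewrite rmorph_prod.
  by apply: eq_bigr => i _; rewrite /Xx rmorphB !frr.
have -> : fr (Bb m rr) = Bb m (fun k => rr k.+1).
  rewrite /Bb rmorph_prod; apply: eq_bigr => k _.
  by rewrite /Xx rmorphB !frr.
rewrite (A_shift hm0) ?(B_shift hm0); first by rewrite mulrN mulN1r.
all: exact: hrr.
Qed.

Local Notation E := ((map_poly io f^`()).[a]).
Local Notation S := (\sum_(i < d) q ^ i)%N.

Lemma ES : E ^+ S = io (lead_coef f) ^+ d * ((-1) ^+ m * delta ^+ 2).
Proof.
rewrite expr_sum.
rewrite (eq_bigr (fun i : 'I_d => io (lead_coef f) * \prod_(1 <= j < d) Xx rr i j)); last first.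
  by move=> i _; rewrite E_pow.
rewrite big_split /= prodr_const card_ord; congr (_ * _).
by rewrite -(D_eq hm0 hrr) /Dd -hdm big_mkord.
Qed.

Lemma final : ~ exists x : K, x ^+ 2 = E.
Proof.
move=> [x hx].
have lc0 : io (lead_coef f) != 0.
  by rewrite fmorph_eq0 lead_coef_eq0 -size_poly_eq0 -lt0n (ltnW size_f_gt1).
have q0 : (0 < q)%N by rewrite (ltnW (q_gt1 F)).
have lcpow : io (lead_coef f) ^+ q.-1 = 1.
  by apply: powm1 => //; rewrite (prednK q0) -rmorphXn expf_card mul1r.
have qd1 : (1 < q ^ d)%N by rewrite -{1}(expn0 q) ltn_exp2l ?q_gt1.
have hS : ((q ^ d).-1 = q.-1 * S)%N by rewrite predn_exp.
have [u hu] := dvdnP h4; rewrite subn1 in hu.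
have x0 : x != 0.
  apply/negP => /eqP x0; move: hx; rewrite x0 expr0n /= => /esym E0.
  have : E ^+ S = 0 by rewrite E0 expr0n; case: eqP => // S0; move: hS; rewrite S0 muln0; lia.
  rewrite ES; apply/eqP; apply: mulf_neq0; first exact: expf_neq0.
  apply: mulf_neq0; last exact: (expf_neq0 _ delta_neq0).
  by rewrite expf_neq0 // oppr_eq0 oner_eq0.
have hx1 : x ^+ (q ^ d).-1 = 1.
  by apply: powm1 => //; rewrite (prednK (ltnW qd1)) -hK expf_card mul1r.
move: hx1; rewrite hS hu.
have -> : (u * 4 * S = 2 * (S * (u * 2)))%N by lia.
rewrite exprM hx exprM ES.
move: delta_pow; move: (Aa m rr * Bb m rr) => dl dp.
rewrite exprMn [X in _ * X]exprMn -!exprM.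
have -> : (d * (u * 2) = q.-1 * m)%N by rewrite hu {1}hdm; lia.
have -> : (m * (u * 2) = 2 * (m * u))%N by lia.
have -> : (2 * (u * 2) = q.-1)%N by rewrite hu; lia.
rewrite exprM lcpow expr1n exprM sqrrN expr1n expr1n dp !mul1r => e.
by move: char_not2; rewrite e eqxx.
Qed.
End Main2.

Theorem lemma5p1 (F : finFieldType) (f : {poly F}) :
  (4 %| #|F| - 1)%N ->
  irreducible_poly f ->
  ~~ odd (size f).-1 ->
  quad_nonresidue (in_qpoly (monic_of f) f^`()).
Proof.
move=> h4 hirr hev.
have sf : (1 < size f)%N by case: hirr.
have lc0 : lead_coef f != 0 by rewrite lead_coef_eq0 -size_poly_eq0 -lt0n (ltnW sf).
set h := monic_of f.
have hmon : h \is monic by rewrite monicE /h /monic_of lead_coefZ mulVf.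
have heq : h %= f by rewrite /h /monic_of eqp_scale // invr_eq0.
have sh : size h = size f by rewrite /h /monic_of size_scale // invr_eq0.
have hI : irreducible_poly h.
  split; first by rewrite sh.
  move=> g sg gdvd; have gf : g %= f.
    by apply: hirr.2 => //; rewrite -(eqp_dvdr _ heq).
  by apply: (eqp_trans gf); rewrite eqp_sym.
have hMI : monic_irreducible_poly h := (hI, hmon).
pose K := {poly %/ h with hMI}.
pose io : {rmorphism F -> K} := qpolyC h.
have hev1 : forall p, (map_poly io p).[('qX : K)] = in_qpoly h p.
  by move=> p; rewrite -in_qpoly_comp_horner comp_polyXr.
have hd0 : (0 < (size f).-1)%N by case: (size f) sf => [|[]].
have hK : #|K| = (#|F| ^ (size f).-1)%N by rewrite card_qfpoly sh.
have f_eq : f = lead_coef f *: h by rewrite /h /monic_of scalerA divff // scale1r.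
have hroot : root (map_poly io f) ('qX : K).
  rewrite /root hev1 f_eq in_qpolyZ.
  have -> : in_qpoly h h = 0.
    by apply: val_inj => /=; rewrite mk_monicE // Pdiv.RingMonic.rmodpp.
  by rewrite scaler0.
have hgen : forall y : K, exists p : {poly F}, y = (map_poly io p).[('qX : K)].
  move=> y; exists (y : {poly F}); rewrite hev1.
  by apply: val_inj; rewrite [RHS]in_qpoly_small ?size_mk_monic.
have key := @final F K io f ('qX : K) h4 hd0 hev hK hroot hgen.
move=> [x hx]; apply: key; exists x; rewrite hev1; exact: hx.
Qed.
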